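(* Let $(R,\mathfrak m)$ be a noetherian local ring, $\nu$ a valuation centered on $R$, $\nu=\nu_1\circ\nu_2$ a decomposition, and $\mathfrak p=\mathfrak C_{\nu_1}(R)$ (so $\nu_2$ is centered on $R/\mathfrak p$). For each local blowing up $R/\mathfrak p\to\overline R^{(1)}$ with respect to $\nu_2$, there exists a local blowing up $R\to R^{(1)}$ with respect to $\nu$ such that $R^{(1)}/\mathfrak p^{(1)}\simeq\overline R^{(1)}$ and $R_{\mathfrak p}\simeq R^{(1)}_{\mathfrak p^{(1)}}$, where $\mathfrak p^{(1)}=\mathfrak C_{\nu_1}(R^{(1)})$.
   Context: All rings are commutative noetherian with $1$. A valuation on a ring $R$ is a map $\nu:R\to\Gamma\cup\{\infty\}$ ($\Gamma$ an ordered abelian group) with $\nu(ab)=\nu(a)+\nu(b)$, $\nu(a+b)\ge\min\{\nu(a),\nu(b)\}$, $\nu(1)=0$, $\nu(0)=\infty$, whose support $\mathrm{supp}(\nu)=\{a:\nu(a)=\infty\}$ is a minimal prime ideal; it extends to localizations at multiplicative sets disjoint from the support via $\nu(a/s)=\nu(a)-\nu(s)$ and restricts to subrings, implicitly. $\nu$ has a center on $R$ if $\nu\ge0$ on $R$; its center is $\mathfrak C_\nu(R)=\{a:\nu(a)>0\}$. $\nu$ is centered on a local ring $(R,\mathfrak m)$ if $\nu\ge0$ on $R$ and $\nu>0$ on $\mathfrak m$. $\nu R$ denotes the subgroup of $\Gamma$ generated by the finite values of $\nu$. Local blowing up: for $b\in R\setminus\mathrm{supp}(\nu)$ let $J(b)=\bigcup_{i\ge1}\mathrm{ann}_R(b^i)$,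 so $R/J(b)\subseteq R_b$. Given $a_1,\ldots,a_r\in R$ with $\nu(a_i)\ge\nu(b)$, let $R'=(R/J(b))[a_1/b,\ldots,a_r/b]\subseteq R_b$ and $R^{(1)}=R'_{\mathfrak C_\nu(R')}$; the canonical map $R\to R^{(1)}$ is the local blowing up of $R$ with respect to $\nu$ along $(b,a_1,\ldots,a_r)$. Decomposition: let $\Delta$ be a convex subgroup of $\nu R$. Define $\nu_1(a)=\nu(a)+\Delta\in\nu R/\Delta$ (and $\infty$ if $\nu(a)=\infty$); $\nu_1$ is a valuation with a center on $R$, and $\mathfrak p=\mathfrak C_{\nu_1}(R)=\{a:\nu(a)>\delta\ \forall\delta\in\Delta\}$. Define $\nu_2$ on $R/\mathfrak p$ by $\nu_2(a+\mathfrak p)=\nu(a)$ for $a\notin\mathfrak p$, $\infty$ for $a\in\mathfrak p$. We write $\nu=\nu_1\circ\nu_2$. On a local blowing up $R^{(1)}$ of $R$ with respect to $\nu$, $\nu_1$ is defined by the same formula from the extension of $\nu$. *)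

(* Defs.v *)
From HB Require Import structures.
From mathcomp Require Import all_boot all_order all_algebra.
Set Implicit Arguments. Unset Strict Implicit. Unset Printing Implicit Defensive.
Import Order.TTheory GRing.Theory.
Local Open Scope ring_scope.

Section Rings.
Variable R : comNzRingType.

Definition is_unit (x : R) : Prop := exists y, x * y = 1.

Definition is_ideal (I : R -> Prop) : Prop :=
  I 0 /\ (forall x y, I x -> I y -> I (x + y)) /\ (forall r x, I x -> I (r * x)).

Definition is_prime_ideal (P : R -> Prop) : Prop :=
  is_ideal P /\ ~ P 1 /\ (forall x y, P (x * y) -> P x \/ P y).

Definition is_minimal_prime (P : R -> Prop) : Prop :=
  is_prime_ideal P /\
  forall Q : R -> Prop, is_prime_ideal Q -> (forall x, Q x -> P x) -> forall x, P x -> Q x.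

Definition noetherian : Prop :=
  forall I : nat -> R -> Prop, (forall n, is_ideal (I n)) ->
    (forall n x, I n x -> I n.+1 x) ->
    exists n, forall m, (n <= m)%N -> forall x, I m x <-> I n x.

Definition is_local (m : R -> Prop) : Prop :=
  is_ideal m /\ ~ m 1 /\ forall x, ~ m x -> is_unit x.

Definition subring_closedP (A : R -> Prop) : Prop :=
  A 1 /\ (forall x y, A x -> A y -> A (x - y)) /\ (forall x y, A x -> A y -> A (x * y)).

Definition gen_subring (G : R -> Prop) (t : R) : Prop :=
  forall A : R -> Prop, subring_closedP A -> (forall x, G x -> A x) -> A t.
End Rings.

(* f : T -> S restricted to the subring A of T is a localization of A at the
   multiplicative subset M of A (Mathlib-style "IsLocalization") *)
Definition is_localization_on (T S : comNzRingType) (A M : T -> Prop) (f : T -> S) : Prop :=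
  [/\ (forall x y, A x -> A y -> f (x + y) = f x + f y),
      (forall x y, A x -> A y -> f (x * y) = f x * f y) /\ f 1 = 1,
      (forall u, M u -> is_unit (f u)),
      (forall s, exists a u, A a /\ M u /\ s * f u = f a)
    & (forall a, A a -> (f a = 0 <-> exists u, M u /\ u * a = 0))].

Definition is_localization (T S : comNzRingType) (M : T -> Prop) (f : T -> S) : Prop :=
  is_localization_on (fun _ => True) M f.

Section Val.
Variables (G : zmodType) (le : rel G).

Definition ordered_group : Prop :=
  [/\ reflexive le, antisymmetric le, transitive le, total le
    & forall x y z, le x y -> le (x + z) (y + z)].

(* G u {oo} is encoded as option G, None = oo *)
Definition vle (x y : option G) : Prop :=
  match x, y with
  | _, None => True
  | None, Some _ => False
  | Some a, Some b => le a b
  end.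
Definition vlt (x y : option G) : Prop := vle x y /\ x <> y.

Definition vadd (x y : option G) : option G :=
  match x, y with
  | Some a, Some b => Some (a + b)
  | _, _ => None
  end.

Section OnRing.
Variable R : comNzRingType.

Definition vsupp (nu : R -> option G) (x : R) : Prop := nu x = None.

Definition vmult (nu : R -> option G) : Prop :=
  forall x y, nu (x * y) = vadd (nu x) (nu y).

Definition is_valuation (nu : R -> option G) : Prop :=
  [/\ vmult nu,
      (forall x y, vle (nu x) (nu (x + y)) \/ vle (nu y) (nu (x + y))),
      nu 1 = Some 0, nu 0 = None
    & is_minimal_prime (vsupp nu)].

Definition centered_on (nu : R -> option G) (m : R -> Prop) : Prop :=
  (forall x, vle (Some 0) (nu x)) /\ (forall x, m x -> vlt (Some 0) (nu x)).

Definition is_subgroup (H : G -> Prop) : Prop :=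
  H 0 /\ forall x y, H x -> H y -> H (x - y).

Definition value_group (nu : R -> option G) (g : G) : Prop :=
  forall H : G -> Prop, is_subgroup H -> (forall x a, nu x = Some a -> H a) -> H g.

Definition convex_subgroup (nu : R -> option G) (D : G -> Prop) : Prop :=
  [/\ is_subgroup D, (forall g, D g -> value_group nu g)
    & forall x y z, D x -> D z -> value_group nu y -> le x y -> le y z -> D y].

(* center of nu_1 = nu mod Delta :  { a | nu a > delta for all delta in Delta } *)
Definition center1 (nu : R -> option G) (D : G -> Prop) (a : R) : Prop :=
  forall d, D d -> vlt (Some d) (nu a).
End OnRing.

(* Local blowing up phi : R -> S of R w.r.t. nu along (b, a_1, ..., a_r):
   T = R_b (via psi), nuT the extension of nu to R_b,
   R' = (R/J(b))[a_1/b, ..., a_r/b] = subring of T generated by psi(R) and the a_i/b,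
   S = R'_{C_nu(R')} (via f), and phi = f o psi. *)
Definition local_blowup (R S : comNzRingType) (phi : R -> S) (nu : R -> option G)
    (b : R) (as_ : seq R) : Prop :=
  nu b <> None /\ (forall a, a \in as_ -> vle (nu b) (nu a)) /\
  exists (T : comNzRingType) (psi : {rmorphism R -> T}) (nuT : T -> option G),
    [/\ is_localization (fun x => exists n, x = b ^+ n) psi,
        vmult nuT, (forall x, nuT (psi x) = nu x)
      & exists f : T -> S,
          let R' := gen_subring (fun t => (exists x, t = psi x) \/
                                          (exists a, a \in as_ /\ t * psi b = psi a)) in
          is_localization_on R' (fun t => R' t /\ ~ vlt (Some 0) (nuT t)) f /\
          forall x, phi x = f (psi x)].
End Val.

(* Main.v *)
Require Import Defs.
From HB Require Import structures.
From mathcomp Require Import all_boot all_order all_algebra.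
From mathcomp Require Import generic_quotient boolp.
From mathcomp Require Import ring.
From Stdlib Require Import Classical_Prop.
Set Implicit Arguments. Unset Strict Implicit. Unset Printing Implicit Defensive.
Import GRing.Theory.
Local Open Scope ring_scope.
Local Open Scope quotient_scope.

Record locHyp (X : comNzRingType) (A M : X -> Prop) : Prop := LocHyp {
  hA1 : A 1; hAB : forall x y, A x -> A y -> A (x - y);
  hAM : forall x y, A x -> A y -> A (x * y);
  hM1 : M 1; hMM : forall x y, M x -> M y -> M (x * y);
  hMA : forall u, M u -> A u; hM0 : ~ M 0 }.

Section Loc.
Variables (X : comNzRingType) (A M : X -> Prop) (H : locHyp A M).

Let A1 := hA1 H. Let AB := hAB H. Let AM := hAM H. Let M1 := hM1 H.
Let MM := hMM H. Let MA := hMA H. Let M0 := hM0 H.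
Lemma hA0 : A 0. Proof. by rewrite -(subrr 1); apply: AB; apply: A1. Qed.
Lemma hAN x : A x -> A (- x).
Proof. by move=> Ax; rewrite -sub0r; apply: AB => //; apply: hA0. Qed.
Lemma hAD x y : A x -> A y -> A (x + y).
Proof. by move=> Ax Ay; rewrite -[y]opprK; apply: AB => //; apply: hAN. Qed.

Definition okp (x : X * X) := A x.1 /\ M x.2.
Definition normp (x : X * X) : X * X := if `[< okp x >] then x else (0, 1).
Lemma okp_norm x : okp (normp x).
Proof.
rewrite /normp; case: asboolP => // _; split; [exact: hA0 | exact: M1].
Qed.
Lemma normp_id x : okp x -> normp x = x.
Proof. by rewrite /normp; case: asboolP. Qed.

Definition Erel (x y : X * X) := exists w, M w /\ w * (x.1 * y.2 - y.1 * x.2) = 0.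
Definition equivl (x y : X * X) := `[< Erel (normp x) (normp y) >].

Lemma Erel_refl x : Erel x x.
Proof. exists 1; split; [exact: M1| by rewrite subrr mulr0]. Qed.
Lemma Erel_sym x y : Erel x y -> Erel y x.
Proof. by case=> w [Mw e]; exists w; split=> //; rewrite -opprB mulrN e oppr0. Qed.
Lemma Erel_trans x y z : okp y -> Erel x y -> Erel y z -> Erel x z.
Proof.
case=> _ My [w [Mw e1]] [w' [Mw' e2]].
exists (w * w' * y.2); split; first by do 2?apply: MM.
have -> : w * w' * y.2 * (x.1 * z.2 - z.1 * x.2) =
  w' * z.2 * (w * (x.1 * y.2 - y.1 * x.2)) + w * x.2 * (w' * (y.1 * z.2 - z.1 * y.2)) by ring.
by rewrite e1 e2 !mulr0 addr0.
Qed.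

Lemma equivl_is_equiv : equiv_class_of equivl.
Proof.
split=> [x|x y|y x z]; rewrite /equivl.
- by apply/asboolP; apply: Erel_refl.
- by apply/idP/idP => /asboolP h; apply/asboolP; apply: Erel_sym.
- move=> /asboolP h1 /asboolP h2; apply/asboolP.
  exact: Erel_trans (okp_norm y) h1 h2.
Qed.

Canonical equivl_equiv := EquivRelPack equivl_is_equiv.
Canonical equivl_encModRel := defaultEncModRel equivl.

Definition qT (_ : locHyp A M) := {eq_quot equivl}.
Definition LT := qT H.
HB.instance Definition _ : EqQuotient (X * X)%type equivl LT := EqQuotient.on LT.
HB.instance Definition _ := Choice.on LT.

Definition cls (x : X * X) : LT := \pi_LT x.

Lemma cls_eq x y : okp x -> okp y -> (cls x = cls y <-> Erel x y).
Proof.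
move=> ox oy; split.
- move=> e; have : x == y %[mod LT] by apply/eqP.
  by rewrite eqmodE /= /equivl => /asboolP; rewrite !normp_id.
- move=> h; apply/eqP; rewrite eqmodE /= /equivl; apply/asboolP; by rewrite !normp_id.
Qed.

Lemma cls_norm x : cls (normp x) = cls x.
Proof.
apply/eqP; rewrite eqmodE /= /equivl; apply/asboolP.
rewrite (normp_id (okp_norm x)); exact: Erel_refl.
Qed.

Lemma cls_surj (z : LT) : exists x, okp x /\ z = cls x.
Proof.
exists (normp (repr z)); split; first exact: okp_norm.
by rewrite cls_norm /cls reprK.
Qed.

Definition addp (x y : X * X) : X * X :=
  let x := normp x in let y := normp y in (x.1 * y.2 + y.1 * x.2, x.2 * y.2).
Definition mulp (x y : X * X) : X * X :=
  let x := normp x in let y := normp y in (x.1 * y.1, x.2 * y.2).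
Definition oppp (x : X * X) : X * X := let x := normp x in (- x.1, x.2).

Lemma okp_addp x y : okp (addp x y).
Proof.
case: (okp_norm x) (okp_norm y) => a u [b v]; split => /=.
  by apply: hAD; apply: AM => //; apply: MA.
exact: MM.
Qed.
Lemma okp_mulp x y : okp (mulp x y).
Proof. case: (okp_norm x) (okp_norm y) => a u [b v]; split; [exact: AM|exact: MM]. Qed.
Lemma okp_oppp x : okp (oppp x).
Proof. case: (okp_norm x) => a u; split => //; exact: hAN. Qed.

Definition zeroL : LT := cls (0, 1).
Definition oneL : LT := cls (1, 1).
Definition addL (a b : LT) : LT := cls (addp (repr a) (repr b)).
Definition mulL (a b : LT) : LT := cls (mulp (repr a) (repr b)).
Definition oppL (a : LT) : LT := cls (oppp (repr a)).

Lemma repr_E x : okp x -> Erel (normp (repr (cls x))) x.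
Proof.
move=> ox; have : cls (normp (repr (cls x))) = cls x by rewrite cls_norm /cls reprK.
by move/(cls_eq (okp_norm _) ox).
Qed.

Lemma normpK x : normp (normp x) = normp x.
Proof. exact: normp_id (okp_norm x). Qed.

Lemma addL_ok x y : okp x -> okp y -> addL (cls x) (cls y) = cls (addp x y).
Proof.
move=> ox oy; apply/(cls_eq (okp_addp _ _) (okp_addp _ _)).
rewrite /addp (normp_id ox) (normp_id oy).
case: (repr_E ox) => w [Mw e1]; case: (repr_E oy) => w' [Mw' e2].
move: e1 e2; set p := normp (repr (cls x)); set q := normp (repr (cls y)) => e1 e2.
exists (w * w'); split; first exact: MM.
rewrite /=.
have -> : w * w' * ((p.1 * q.2 + q.1 * p.2) * (x.2 * y.2) - (x.1 * y.2 + y.1 * x.2) * (p.2 * q.2))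
  = w' * q.2 * y.2 * (w * (p.1 * x.2 - x.1 * p.2)) + w * p.2 * x.2 * (w' * (q.1 * y.2 - y.1 * q.2)) by ring.
by rewrite e1 e2 !mulr0 addr0.
Qed.

Lemma mulL_ok x y : okp x -> okp y -> mulL (cls x) (cls y) = cls (mulp x y).
Proof.
move=> ox oy; apply/(cls_eq (okp_mulp _ _) (okp_mulp _ _)).
rewrite /mulp (normp_id ox) (normp_id oy).
case: (repr_E ox) => w [Mw e1]; case: (repr_E oy) => w' [Mw' e2].
move: e1 e2; set p := normp (repr (cls x)); set q := normp (repr (cls y)) => e1 e2.
exists (w * w'); split; first exact: MM.
rewrite /=.
have -> : w * w' * (p.1 * q.1 * (x.2 * y.2) - x.1 * y.1 * (p.2 * q.2))
  = w' * q.1 * y.2 * (w * (p.1 * x.2 - x.1 * p.2)) + w * x.1 * p.2 * (w' * (q.1 * y.2 - y.1 * q.2)) by ring.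
by rewrite e1 e2 !mulr0 addr0.
Qed.

Lemma oppL_ok x : okp x -> oppL (cls x) = cls (oppp x).
Proof.
move=> ox; apply/(cls_eq (okp_oppp _) (okp_oppp _)).
rewrite /oppp (normp_id ox).
case: (repr_E ox) => w [Mw e1].
move: e1; set p := normp (repr (cls x)) => e1.
exists w; split => //=.
have -> : w * (- p.1 * x.2 - - x.1 * p.2) = - (w * (p.1 * x.2 - x.1 * p.2)) by ring.
by rewrite e1 oppr0.
Qed.

Lemma addL_cls x y : addL (cls x) (cls y) = cls (addp x y).
Proof.
rewrite -(cls_norm x) -(cls_norm y) (addL_ok (okp_norm x) (okp_norm y)).
by rewrite /addp /= !normpK.
Qed.
Lemma mulL_cls x y : mulL (cls x) (cls y) = cls (mulp x y).
Proof.
rewrite -(cls_norm x) -(cls_norm y) (mulL_ok (okp_norm x) (okp_norm y)).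
by rewrite /mulp /= !normpK.
Qed.
Lemma oppL_cls x : oppL (cls x) = cls (oppp x).
Proof. by rewrite -(cls_norm x) (oppL_ok (okp_norm x)) /oppp /= !normpK. Qed.

Lemma addpE x y : okp x -> okp y -> addp x y = (x.1 * y.2 + y.1 * x.2, x.2 * y.2).
Proof. by move=> ox oy; rewrite /addp !normp_id. Qed.
Lemma mulpE x y : okp x -> okp y -> mulp x y = (x.1 * y.1, x.2 * y.2).
Proof. by move=> ox oy; rewrite /mulp !normp_id. Qed.
Lemma opppE x : okp x -> oppp x = (- x.1, x.2).
Proof. by move=> ox; rewrite /oppp !normp_id. Qed.

Lemma ok01 : okp (0, 1). Proof. split; [exact: hA0| exact: M1]. Qed.
Lemma ok11 : okp (1, 1). Proof. split; [exact: A1| exact: M1]. Qed.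

Lemma okp_addE x y : okp x -> okp y -> okp (x.1 * y.2 + y.1 * x.2, x.2 * y.2).
Proof. by move=> ox oy; have := okp_addp x y; rewrite addpE. Qed.
Lemma okp_mulE x y : okp x -> okp y -> okp (x.1 * y.1, x.2 * y.2).
Proof. by move=> ox oy; have := okp_mulp x y; rewrite mulpE. Qed.
Lemma okp_oppE x : okp x -> okp (- x.1, x.2).
Proof. by move=> ox; have := okp_oppp x; rewrite opppE. Qed.
Hint Resolve okp_addE okp_mulE okp_oppE : core.
Hint Resolve okp_addp okp_mulp okp_oppp ok01 ok11 : core.

Lemma eqE x y : okp x -> okp y -> x.1 * y.2 = y.1 * x.2 -> cls x = cls y.
Proof.
move=> ox oy e; apply/cls_eq => //; exists 1; split; first exact: M1.
by rewrite e subrr mulr0.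
Qed.

Ltac lift3 a b c := case: (cls_surj a) => ? [? ->]; case: (cls_surj b) => ? [? ->];
  case: (cls_surj c) => ? [? ->].
Ltac lift2 a b := case: (cls_surj a) => ? [? ->]; case: (cls_surj b) => ? [? ->].
Ltac lift1 a := case: (cls_surj a) => ? [? ->].

Lemma addLA : associative addL.
Proof.
move=> a b c; lift3 a b c; rewrite !addL_cls; apply: eqE => //.
rewrite ?addpE ?mulpE ?opppE; try (by auto); simpl; ring.
Qed.
Lemma addLC : commutative addL.
Proof.
move=> a b; lift2 a b; rewrite !addL_cls; apply: eqE => //.
rewrite ?addpE ?mulpE ?opppE; try (by auto); simpl; ring.
Qed.
Lemma add0L : left_id zeroL addL.
Proof.
move=> a; lift1 a; rewrite /zeroL !addL_cls; apply: eqE => //.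
rewrite ?addpE ?mulpE ?opppE; try (by auto); simpl; ring.
Qed.
Lemma addNL : left_inverse zeroL oppL addL.
Proof.
move=> a; lift1 a; rewrite /zeroL !oppL_cls !addL_cls; apply: eqE => //.
rewrite ?addpE ?mulpE ?opppE; try (by auto); simpl; ring.
Qed.
HB.instance Definition _ := GRing.isZmodule.Build LT addLA addLC add0L addNL.

Lemma mulLA : associative mulL.
Proof.
move=> a b c; lift3 a b c; rewrite !mulL_cls; apply: eqE => //.
rewrite ?addpE ?mulpE ?opppE; try (by auto); simpl; ring.
Qed.
Lemma mulLC : commutative mulL.
Proof.
move=> a b; lift2 a b; rewrite !mulL_cls; apply: eqE => //.
rewrite ?addpE ?mulpE ?opppE; try (by auto); simpl; ring.
Qed.
Lemma mul1L : left_id oneL mulL.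
Proof.
move=> a; lift1 a; rewrite /oneL !mulL_cls; apply: eqE => //.
rewrite ?addpE ?mulpE ?opppE; try (by auto); simpl; ring.
Qed.
Lemma mulLDl : left_distributive mulL addL.
Proof.
move=> a b c; case: (cls_surj a) => x [ox ->]; case: (cls_surj b) => y [oy ->];
case: (cls_surj c) => z [oz ->].
rewrite (addL_cls x y) (mulL_cls (addp x y) z) (mulL_cls x z) (mulL_cls y z).
rewrite (addL_cls (mulp x z) (mulp y z)); apply: eqE => //.
rewrite ?addpE ?mulpE ?opppE; try (by auto); simpl. ring.
Qed.
Lemma oneL_neq0 : oneL != zeroL.
Proof.
apply/eqP => /(cls_eq ok11 ok01) [w [Mw]] /= e.
have e' : w * (1 * 1 - 0 * 1) = w by ring.
by apply: M0; rewrite -e e'.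
Qed.
HB.instance Definition _ := GRing.Zmodule_isComNzRing.Build LT mulLA mulLC mul1L mulLDl oneL_neq0.

End Loc.

Definition mkRM (R S : comNzRingType) (f : R -> S) (h1 : nmod_morphism f) (h2 : monoid_morphism f) : {rmorphism R -> S} :=
  HB.pack f (GRing.isNmodMorphism.Build R S f h1) (GRing.isMonoidMorphism.Build R S f h2).

Section UInv.
Variable Y : comNzRingType.
Definition uinv (y : Y) : Y :=
  match pselect (exists z, y * z = 1) with left P => projT1 (cid P) | right _ => 0 end.
Lemma uinvK (y : Y) : is_unit y -> y * uinv y = 1.
Proof.
rewrite /uinv => h; case: pselect => [P|/(_ h)//]; exact: projT2 (cid P).
Qed.
Lemma uinv_unit (y : Y) : is_unit y -> is_unit (uinv y).
Proof. by move=> h; exists y; rewrite mulrC uinvK. Qed.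
Lemma unitM (x y : Y) : is_unit x -> is_unit y -> is_unit (x * y).
Proof. by case=> a ha [b hb]; exists (a * b); rewrite mulrACA ha hb mulr1. Qed.
Lemma unit_uniq (y z : Y) : y * z = 1 -> uinv y = z.
Proof.
move=> h; have u : is_unit y by exists z.
by rewrite -[uinv y]mulr1 -h mulrA [uinv y * y]mulrC uinvK // mul1r.
Qed.
Lemma uinvM (x y : Y) : is_unit x -> is_unit y -> uinv (x * y) = uinv x * uinv y.
Proof.
move=> ux uy; apply: unit_uniq.
by rewrite mulrACA !uinvK // mulr1.
Qed.
Lemma uinv1 : uinv 1 = 1 :> Y.
Proof. by apply: unit_uniq; rewrite mulr1. Qed.
Lemma unit_mul0 (y z : Y) : is_unit y -> y * z = 0 -> z = 0.
Proof. by case=> a ha e; rewrite -[z]mul1r -ha mulrAC e mul0r. Qed.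
Lemma unit_neq0 (y : Y) : is_unit y -> y <> 0.
Proof. by case=> a ha e; move: ha; rewrite e mul0r => /eqP; rewrite eq_sym oner_eq0. Qed.
End UInv.

Section Loc2.
Variables (X : comNzRingType) (A M : X -> Prop) (H : locHyp A M).
Local Notation LT := (LT H).
Local Notation cls := (@cls X A M H).

Definition toL (x : X) : LT := if `[< A x >] then cls (x, 1) else 0.
Lemma toL_A x : A x -> toL x = cls (x, 1).
Proof. by rewrite /toL; case: asboolP. Qed.

Lemma okp1 x : A x -> okp A M (x, 1).
Proof. by split => //; exact: hM1 H. Qed.

Lemma clsM x y : cls x * cls y = cls (mulp A M x y).
Proof. exact: mulL_cls. Qed.
Lemma clsD x y : cls x + cls y = cls (addp A M x y).
Proof. exact: addL_cls. Qed.
Lemma clsN x : - cls x = cls (oppp A M x).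
Proof. exact: oppL_cls. Qed.
Lemma cls1 : cls (1, 1) = 1. Proof. by []. Qed.
Lemma cls0 : cls (0, 1) = 0. Proof. by []. Qed.

Lemma eqL x y : okp A M x -> okp A M y -> x.1 * y.2 = y.1 * x.2 -> cls x = cls y.
Proof. exact: eqE. Qed.

Lemma toLD x y : A x -> A y -> toL (x + y) = toL x + toL y.
Proof.
move=> Ax Ay; rewrite (toL_A (hAD H Ax Ay)) (toL_A Ax) (toL_A Ay) clsD; apply: eqL.
- exact: okp1 (hAD H Ax Ay).
- exact: okp_addp.
by rewrite addpE /=; [ring | exact: okp1 | exact: okp1].
Qed.
Lemma toLM x y : A x -> A y -> toL (x * y) = toL x * toL y.
Proof.
move=> Ax Ay; rewrite (toL_A (hAM H Ax Ay)) (toL_A Ax) (toL_A Ay) clsM; apply: eqL.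
- exact: okp1 (hAM H Ax Ay).
- exact: okp_mulp.
by rewrite mulpE /=; [ring | exact: okp1 | exact: okp1].
Qed.
Lemma toL1 : toL 1 = 1.
Proof. by rewrite toL_A //; exact: hA1 H. Qed.

Lemma clsE a u : okp A M (a, u) -> cls (a, u) * toL u = toL a.
Proof.
case=> /= Aa Mu; rewrite (toL_A Aa) (toL_A (hMA H Mu)) clsM; apply: eqL.
- exact: okp_mulp.
- exact: okp1.
by rewrite mulpE /=; [ring | split => // | exact: okp1 (hMA H Mu)].
Qed.

Lemma toL_unit u : M u -> is_unit (toL u).
Proof.
move=> Mu; exists (cls (1, u)); rewrite mulrC clsE ?toL1 //.
split => //; exact: hA1 H.
Qed.

Lemma toL0 a : A a -> (toL a = 0 <-> exists u, M u /\ u * a = 0).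
Proof.
move=> Aa; rewrite toL_A // -cls0; split.
- move/(cls_eq H (okp1 Aa) (ok01 H)) => [w [Mw e]]; exists w; split => //.
  by move: e; rewrite /= mul0r subr0 mulr1.
- case=> w [Mw e]; apply/(cls_eq H (okp1 Aa) (ok01 H)); exists w; split => //.
  by rewrite /= mul0r subr0 mulr1.
Qed.

Lemma cls_surjL (z : LT) : exists a u, okp A M (a, u) /\ z = cls (a, u).
Proof. by case: (cls_surj z) => [[a u] [o e]]; exists a, u. Qed.

Lemma loc_on : is_localization_on A M toL.
Proof.
split.
- exact: toLD.
- split; [exact: toLM | exact: toL1].
- exact: toL_unit.
- move=> s; case: (cls_surjL s) => a [u [o ->]]; exists a, u; split; first by case: o.
  split; first by case: o.
  exact: clsE.
- exact: toL0.
Qed.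

Section Lift.
Variables (Y : comNzRingType) (g : X -> Y).
Hypotheses (gD : forall x y, A x -> A y -> g (x + y) = g x + g y)
  (gM : forall x y, A x -> A y -> g (x * y) = g x * g y) (g1 : g 1 = 1)
  (gU : forall u, M u -> is_unit (g u)).

Lemma gB x y : A x -> A y -> g (x - y) = g x - g y.
Proof.
move=> Ax Ay; apply/eqP; rewrite eq_sym subr_eq -gD ?subrK //.
exact: (hAB H).
Qed.

Lemma g0 : g 0 = 0.
Proof. by have := gB (hA0 H) (hA0 H); rewrite subrr => ->; rewrite subrr. Qed.

Definition liftL (z : LT) : Y :=
  let p := normp A M (repr z) in g p.1 * uinv (g p.2).

Lemma liftL_cls a u : okp A M (a, u) -> liftL (cls (a, u)) = g a * uinv (g u).
Proof.
move=> o; rewrite /liftL.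
have [w [Mw e]] := repr_E H o.
move: e; set p := normp A M _ => e.
have [Ap Mp] := okp_norm H (repr (cls (a, u))); rewrite -/p in Ap Mp.
case: o => /= Aa Mu.
have Au := hMA H Mu; have Ap2 := hMA H Mp; have Aw := hMA H Mw.
have ge : g w * (g p.1 * g u - g a * g p.2) = 0.
  rewrite -!gM // -gB; try exact: (hAM H).
  rewrite -gM; [by rewrite e g0 | done | apply: (hAB H); exact: (hAM H)].
have := unit_mul0 (gU Mw) ge; move/eqP; rewrite subr_eq0 => /eqP e2.
have uu := gU Mu; have up := gU Mp.
rewrite -[LHS]mulr1 -(uinvK uu) -[RHS]mulr1 -(uinvK up).
have -> : g p.1 * uinv (g p.2) * (g u * uinv (g u)) = (g p.1 * g u) * (uinv (g p.2) * uinv (g u)) by ring.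
rewrite e2; ring.
Qed.

Lemma liftL_toL x : A x -> liftL (toL x) = g x.
Proof. by move=> Ax; rewrite (toL_A Ax) (liftL_cls (okp1 Ax)) g1 uinv1 mulr1. Qed.

Lemma liftL_is_nmod : nmod_morphism liftL.
Proof.
split.
  by rewrite -cls0 (liftL_cls (ok01 H)) g0 mul0r.
move=> z1 z2; case: (cls_surjL z1) => a [u [o ->]]; case: (cls_surjL z2) => a' [u' [o' ->]].
rewrite clsD (addpE o o') (liftL_cls (okp_addE H o o')) !liftL_cls //=.
case: o o' => /= Aa Mu [/= Aa' Mu'].
have Au := hMA H Mu; have Au' := hMA H Mu'.
rewrite gD; try (apply: (hAM H) => //).
rewrite !gM // (uinvM (gU Mu) (gU Mu')).
have hu := uinvK (gU Mu); have hu' := uinvK (gU Mu').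
have -> : (g a * g u' + g a' * g u) * (uinv (g u) * uinv (g u')) =
  g a * uinv (g u) * (g u' * uinv (g u')) + g a' * uinv (g u') * (g u * uinv (g u)) by ring.
by rewrite hu hu' !mulr1.
Qed.

Lemma liftL_is_monoid : monoid_morphism liftL.
Proof.
split.
  by rewrite -cls1 (liftL_cls (ok11 H)) g1 uinv1 mulr1.
move=> z1 z2; case: (cls_surjL z1) => a [u [o ->]]; case: (cls_surjL z2) => a' [u' [o' ->]].
rewrite clsM (mulpE o o') (liftL_cls (okp_mulE H o o')) !liftL_cls //=.
case: o o' => /= Aa Mu [/= Aa' Mu'].
have Au := hMA H Mu; have Au' := hMA H Mu'.
rewrite !gM // (uinvM (gU Mu) (gU Mu')); ring.
Qed.

Definition liftRM : {rmorphism LT -> Y} := mkRM liftL_is_nmod liftL_is_monoid.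
Lemma liftRME z : liftRM z = liftL z. Proof. by []. Qed.
End Lift.
End Loc2.

Section OptAlg.
Variables (G : zmodType) (le : rel G).
Hypothesis Hord : ordered_group le.
Local Notation vle := (vle le).
Local Notation vlt := (vlt le).
Implicit Types (x y z : option G).

Definition vsub (x y : option G) : option G :=
  match x, y with Some a, Some b => Some (a - b) | _, _ => None end.

Lemma le_refl (x : G) : le x x. Proof. by case: Hord. Qed.
Lemma le_trans (x y z : G) : le x y -> le y z -> le x z.
Proof. by case: Hord => _ _ t _ _; move=> h1 h2; apply: (t y). Qed.
Lemma le_anti (x y : G) : le x y -> le y x -> x = y.
Proof. by case: Hord => _ a _ _ _ h1 h2; apply: a; rewrite h1 h2. Qed.
Lemma le_total (x y : G) : le x y \/ le y x.
Proof. by case: Hord => _ _ _ t _; case/orP: (t x y); [left|right]. Qed.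
Lemma le_addr (x y z : G) : le x y -> le (x + z) (y + z).
Proof. by case: Hord => _ _ _ _; apply. Qed.
Lemma le_addl (x y z : G) : le x y -> le (z + x) (z + y).
Proof. by rewrite ![z + _]addrC; apply: le_addr. Qed.
Lemma le_add (x y x' y' : G) : le x y -> le x' y' -> le (x + x') (y + y').
Proof. move=> h h'; apply: le_trans (le_addr x' h) (le_addl y h'). Qed.
Lemma le_subr (x y z : G) : le (x + z) (y + z) -> le x y.
Proof. by move/(le_addr (- z)); rewrite !addrK. Qed.

Lemma gsub_eq (a b c d : G) : a + d = c + b -> a - b = c - d.
Proof. by move=> e; apply/eqP; rewrite subr_eq addrAC eq_sym subr_eq -e. Qed.

Lemma vle_trans x y z : vle x y -> vle y z -> vle x z.
Proof. by case: x => [a|]; case: y => [b|]; case: z => [c|] //=; apply: le_trans. Qed.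
Lemma vle_refl x : vle x x.
Proof. by case: x => [a|] //=; apply: le_refl. Qed.
Lemma vle_add x y x' y' : vle x y -> vle x' y' -> vle (vadd x x') (vadd y y').
Proof. by case: x => [a|]; case: y => [b|]; case: x' => [a'|]; case: y' => [b'|] //=; apply: le_add. Qed.
Lemma vlt_vle x y : vlt x y -> vle x y. Proof. by case. Qed.

Lemma vadd_None x : vadd x None = None. Proof. by case: x. Qed.
Lemma vaddC x y : vadd x y = vadd y x.
Proof. by case: x => [a|]; case: y => [b|] //=; rewrite addrC. Qed.
Lemma vaddA x y z : vadd x (vadd y z) = vadd (vadd x y) z.
Proof. by case: x => [a|]; case: y => [b|]; case: z => [c|] //=; rewrite addrA. Qed.
Lemma vadd0 x : vadd x (Some 0) = x.
Proof. by case: x => [a|] //=; rewrite addr0. Qed.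

Lemma vadd_cancel x y (c : G) : vadd x (Some c) = vadd y (Some c) -> x = y.
Proof. by case: x => [a|]; case: y => [b|] //= [] /addIr ->. Qed.

Lemma vsub_vadd x (c : G) : vadd (vsub x (Some c)) (Some c) = x.
Proof. by case: x => [a|] //=; rewrite subrK. Qed.
Lemma vadd_vsub x (c : G) : vsub (vadd x (Some c)) (Some c) = x.
Proof. by case: x => [a|] //=; rewrite addrK. Qed.
Lemma vsub_eq x y (c : G) : vadd x (Some c) = y -> x = vsub y (Some c).
Proof. by move=> <-; rewrite vadd_vsub. Qed.

Lemma vsub_mul x x' (c c' : G) :
  vsub (vadd x x') (Some (c + c')) = vadd (vsub x (Some c)) (vsub x' (Some c')).
Proof. by case: x => [a|]; case: x' => [a'|] //=; rewrite opprD addrACA. Qed.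

Lemma vle_vsub0 x (c : G) : vle (Some 0) (vsub x (Some c)) <-> vle (Some c) x.
Proof.
case: x => [a|] //=; split => h.
  by move/(le_addr c): h; rewrite add0r subrK.
by apply: (@le_subr _ _ c); rewrite add0r subrK.
Qed.

Lemma vlt_shift (d : G) x (c : G) : vlt (Some d) (vsub x (Some c)) <-> vlt (Some (d + c)) x.
Proof.
case: x => [a|]; rewrite /vlt //=; split.
- case=> h ne; split; first by move/(le_addr c): h; rewrite subrK.
  by case=> e; apply: ne; rewrite -e addrK.
- case=> h ne; split; first by apply: (@le_subr _ _ c); rewrite subrK.
  by case=> e; apply: ne; rewrite e subrK.
Qed.

Lemma double0 (c : G) : c + c = 0 -> c = 0.
Proof.
move=> e; case: (le_total 0 c) => h.
- apply: le_anti => //; have := le_addr c h; rewrite add0r e //.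
- apply: le_anti => //; have := le_addr c h; rewrite add0r e //.
Qed.
End OptAlg.

Section NuL.
Variables (X : comNzRingType) (A M : X -> Prop) (H : locHyp A M).
Variables (G : zmodType) (nuX : X -> option G).
Hypotheses (nuXm : vmult nuX) (nuX1 : nuX 1 = Some 0)
  (nuXfin : forall u, M u -> nuX u <> None).

Definition nuL (z : LT H) : option G :=
  let p := normp A M (repr z) in vsub (nuX p.1) (nuX p.2).

Lemma fin_eq u : M u -> exists c, nuX u = Some c.
Proof. by move/nuXfin; case: (nuX u) => [c|] // _; exists c. Qed.

Lemma nuL_cls a u : okp A M (a, u) -> nuL (cls H (a, u)) = vsub (nuX a) (nuX u).
Proof.
move=> o; rewrite /nuL.
have [w [Mw e]] := repr_E H o.
move: e; set p := normp A M _ => e.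
have [_ Mp] := okp_norm H (repr (cls H (a, u))); rewrite -/p in Mp.
case: o => /= _ Mu.
have e1 : w * (p.1 * u) = w * (a * p.2).
  by apply/eqP; rewrite -subr_eq0 -mulrBr e.
move: (congr1 nuX e1); rewrite !nuXm.
have [cw ->] := fin_eq Mw; have [cu ->] := fin_eq Mu; have [cp ->] := fin_eq Mp.
case: (nuX p.1) => [x|]; case: (nuX a) => [y|] //= [].
by move/addrI => /gsub_eq ->.
Qed.

Lemma nuL_mult : vmult nuL.
Proof.
move=> z1 z2; case: (cls_surjL z1) => a [u [o ->]]; case: (cls_surjL z2) => a' [u' [o' ->]].
rewrite clsM (mulpE o o') (nuL_cls (okp_mulE H o o')) !nuL_cls //= !nuXm.
case: o o' => _ Mu [_ Mu'].
have [cu ->] := fin_eq Mu; have [cu' ->] := fin_eq Mu'.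
by rewrite /= vsub_mul.
Qed.

Lemma nuL_toL x : A x -> nuL (toL H x) = nuX x.
Proof.
move=> Ax; rewrite (toL_A H Ax) (nuL_cls (okp1 H Ax)) nuX1.
by case: (nuX x) => [c|] //=; rewrite subr0.
Qed.
End NuL.

Local Close Scope quotient_scope.
Definition idRM_nmod (X : comNzRingType) : nmod_morphism (fun x : X => x). Proof. by []. Qed.
Definition idRM_monoid (X : comNzRingType) : monoid_morphism (fun x : X => x). Proof. by []. Qed.
Definition idRM (X : comNzRingType) : {rmorphism X -> X} := mkRM (idRM_nmod X) (idRM_monoid X).

Section GenSub.
Variables (T : comNzRingType) (Gn : T -> Prop).
Lemma gen_closed : subring_closedP (gen_subring Gn).
Proof.
split; [|split].
- by move=> B [B1 _] _.
- by move=> x y hx hy B hB hG; case: (hB) => _ [hBB _]; apply: hBB; [apply: hx|apply: hy].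
- by move=> x y hx hy B hB hG; case: (hB) => _ [_ hBM]; apply: hBM; [apply: hx|apply: hy].
Qed.
Lemma gen_gen x : Gn x -> gen_subring Gn x.
Proof. by move=> gx B _; apply. Qed.
Lemma gen_ind (B : T -> Prop) : subring_closedP B -> (forall x, Gn x -> B x) ->
  forall x, gen_subring Gn x -> B x.
Proof. by move=> hB hG x; apply. Qed.
End GenSub.

Section Main.
Variables (R : comNzRingType) (m : R -> Prop) (G : zmodType) (le : rel G)
  (nu : R -> option G) (D : G -> Prop).
Hypotheses (Hord : ordered_group le) (Hval : is_valuation le nu)
  (Hcent : centered_on le nu m) (HD : convex_subgroup le nu D).
Variables (Q : comNzRingType) (pi : {rmorphism R -> Q}).
Hypotheses (Hpi_surj : forall y, exists x, pi x = y)
  (Hpi_ker : forall x, pi x = 0 <-> center1 le nu D x).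
Variable nu2 : Q -> option G.
Hypothesis Hnu2 : forall x, (center1 le nu D x -> nu2 (pi x) = None) /\
                    (~ center1 le nu D x -> nu2 (pi x) = nu x).
Variables (Rbar1 : comNzRingType) (phibar : {rmorphism Q -> Rbar1}) (bbar : Q) (asbar : seq Q).
Hypotheses (Hbb : nu2 bbar <> None) (Has : forall a, a \in asbar -> vle le (nu2 bbar) (nu2 a)).
Variables (Tb : comNzRingType) (psib : {rmorphism Q -> Tb}) (nuTb : Tb -> option G) (fb : Tb -> Rbar1).
Hypotheses (Hlocb : is_localization (fun x => exists n, x = bbar ^+ n) psib)
  (HnuTbm : vmult nuTb) (HnuTbE : forall x, nuTb (psib x) = nu2 x).
Let Rb' := gen_subring (fun t => (exists x, t = psib x) \/
                         (exists a, a \in asbar /\ t * psib bbar = psib a)).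
Let Mb' := fun t => Rb' t /\ ~ vlt le (Some 0) (nuTb t).
Hypotheses (Hfb : is_localization_on Rb' Mb' fb) (Hphib : forall x, phibar x = fb (psib x)).

Local Notation p := (center1 le nu D).
Local Notation vle := (vle le).
Local Notation vlt := (vlt le).

Lemma num : vmult nu. Proof. by case: Hval. Qed.
Lemma nu1 : nu 1 = Some 0. Proof. by case: Hval. Qed.
Lemma nu0 : nu 0 = None. Proof. by case: Hval. Qed.
Lemma nu_ultra x y : vle (nu x) (nu (x + y)) \/ vle (nu y) (nu (x + y)).
Proof. by case: Hval => _ h _ _ _; apply: h. Qed.
Lemma nu_ge0 x : vle (Some 0) (nu x). Proof. by case: Hcent. Qed.

Lemma D0 : D 0. Proof. by case: HD => [[]]. Qed.
Lemma DB x y : D x -> D y -> D (x - y). Proof. by case: HD => [[_ h]] _ _; apply: h. Qed.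
Lemma DN x : D x -> D (- x). Proof. by move=> h; rewrite -sub0r; apply: DB => //; apply: D0. Qed.
Lemma DD x y : D x -> D y -> D (x + y).
Proof. by move=> hx hy; rewrite -[y]opprK; apply: DB => //; apply: DN. Qed.
Lemma Dn x n : D x -> D (x *+ n).
Proof. by move=> hx; elim: n => [|n IH]; [rewrite mulr0n; apply: D0 | rewrite mulrS; apply: DD]. Qed.

Lemma VG x g : nu x = Some g -> value_group nu g.
Proof. by move=> e H0 _ hH; apply: (hH x). Qed.

Lemma inD_p x g : nu x = Some g -> D g -> ~ p x.
Proof. by move=> e Dg hp; case: (hp g Dg); rewrite e. Qed.

Lemma p_inD x : ~ p x -> exists g, nu x = Some g /\ D g.
Proof.
move=> np.
have [d [Dd nlt]] : exists d, D d /\ ~ vlt (Some d) (nu x).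
  apply: NNPP => hn; apply: np => d Dd; apply: NNPP => h; apply: hn; by exists d.
case E: (nu x) nlt => [g|] nlt; last by exfalso; apply: nlt; split.
exists g; split => //.
have [dg|ndg] := pselect (d = g); first by rewrite -dg.
have lgd : le g d.
  case: (le_total Hord d g) => // h; exfalso; apply: nlt; split => //; by case.
case: HD => _ _ conv; apply: (conv 0 g d) => //; first exact: D0.
- exact: VG E.
- by have := nu_ge0 x; rewrite E.
Qed.

Lemma p0 : p 0. Proof. by move=> d _; rewrite nu0; split. Qed.
Lemma np1 : ~ p 1. Proof. apply: (inD_p nu1); exact: D0. Qed.
Lemma pM x y : ~ p x -> ~ p y -> ~ p (x * y).
Proof.
move=> /p_inD [g [ex Dg]] /p_inD [h [ey Dh]].
apply: (@inD_p _ (g + h)); first by rewrite num ex ey.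
exact: DD.
Qed.

Lemma p_pi x : p x <-> pi x = 0. Proof. by split => /Hpi_ker. Qed.
Lemma nu2_p x : p x -> nu2 (pi x) = None. Proof. by case: (Hnu2 x). Qed.
Lemma nu2_np x : ~ p x -> nu2 (pi x) = nu x. Proof. by case: (Hnu2 x). Qed.

Definition lft (y : Q) : R := projT1 (cid (Hpi_surj y)).
Lemma lftK y : pi (lft y) = y. Proof. exact: projT2 (cid (Hpi_surj y)). Qed.
Definition b := lft bbar.
Definition as_ := map lft asbar.
Lemma pib : pi b = bbar. Proof. exact: lftK. Qed.
Lemma nb : ~ p b.
Proof. by move=> hp; apply: Hbb; rewrite -pib nu2_p. Qed.
Definition gb : G := projT1 (cid (p_inD nb)).
Lemma nub : nu b = Some gb. Proof. by case: (projT2 (cid (p_inD nb))). Qed.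
Lemma Dgb : D gb. Proof. by case: (projT2 (cid (p_inD nb))). Qed.
Lemma nubn n : nu (b ^+ n) = Some (gb *+ n).
Proof.
elim: n => [|n IH]; first by rewrite expr0 mulr0n nu1.
by rewrite exprS num IH nub /= mulrS.
Qed.

Lemma as_le a : a \in as_ -> vle (nu b) (nu a).
Proof.
case/mapP => y ya ->.
have h := Has ya; rewrite -pib -(lftK y) (nu2_np nb) in h; move: h.
have [hp|nhp] := pselect (p (lft y)).
- move=> _; rewrite nub; apply: vlt_vle; exact: (hp gb Dgb).
- by rewrite (nu2_np nhp).
Qed.

Definition Mb (x : R) := exists n, x = b ^+ n.
Lemma HT : locHyp (fun _ : R => True) Mb.
Proof.
split => //.
- by exists 0%N; rewrite expr0.
- by move=> x y [i ->] [j ->]; exists (i + j)%N; rewrite exprD.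
- by case=> n e; move: (nubn n); rewrite -e nu0.
Qed.
Definition T := LT HT.
Lemma psi_nmod : nmod_morphism (toL HT).
Proof. by split; [rewrite toL_A // | move=> x y; rewrite toLD]. Qed.
Lemma psi_monoid : monoid_morphism (toL HT).
Proof. by split; [rewrite toL1 | move=> x y; rewrite toLM]. Qed.
Definition psi : {rmorphism R -> T} := mkRM psi_nmod psi_monoid.

Lemma nuMb u : Mb u -> nu u <> None.
Proof. by case=> n ->; rewrite nubn. Qed.
Definition nuT : T -> option G := @nuL _ _ _ HT _ nu.
Lemma nuTm : vmult nuT. Proof. exact: nuL_mult num nuMb. Qed.
Lemma nuT_psi x : nuT (psi x) = nu x. Proof. exact: nuL_toL num nu1 nuMb x I. Qed.
Lemma nuT_cls a n : nuT (cls HT (a, b ^+ n)) = vsub (nu a) (Some (gb *+ n)).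
Proof. by rewrite /nuT (nuL_cls HT num nuMb) ?nubn //; split => //; exists n. Qed.
Lemma nuT1 : nuT 1 = Some 0. Proof. by rewrite -(rmorph1 psi) nuT_psi nu1. Qed.
Lemma nuT0 : nuT 0 = None. Proof. by rewrite -(rmorph0 psi) nuT_psi nu0. Qed.

Lemma T_surj (t : T) : exists a n, t = cls HT (a, b ^+ n).
Proof. by case: (cls_surjL t) => a [u [[_ [n eu]] ->]]; exists a, n; rewrite -eu. Qed.

Lemma nu_m1 : nu (-1) = Some 0.
Proof.
have := num (-1) (-1); rewrite mulrNN mulr1 nu1.
case: (nu (-1)) => [c|] //= [] e.
by rewrite (double0 Hord (esym e)).
Qed.
Lemma nu_neg z : nu (- z) = nu z.
Proof. by rewrite -mulN1r num nu_m1; case: (nu z) => //= c; rewrite add0r. Qed.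

Definition Gen (t : T) := (exists x, t = psi x) \/ (exists a, a \in as_ /\ t * psi b = psi a).
Definition Rp := gen_subring Gen.

Lemma vle_sub_ge (a a' u u' : R) : Mb u -> Mb u' -> vle (nu u) (nu a) -> vle (nu u') (nu a') ->
  vle (nu (u * u')) (nu (a * u' - a' * u)).
Proof.
move=> Mu Mu' h h'.
case: (nu_ultra (a * u') (- (a' * u))) => h2; apply: (vle_trans Hord _ h2).
- by rewrite !num; apply: (vle_add Hord h (vle_refl Hord _)).
- rewrite nu_neg !num [vadd (nu u) _]vaddC. apply: (vle_add Hord h' (vle_refl Hord _)).
Qed.

Lemma okT a n : okp (fun _ : R => True) Mb (a, b ^+ n).
Proof. by split => //; exists n. Qed.

Lemma nuT_ge0 t : Rp t -> vle (Some 0) (nuT t).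
Proof.
move: t; apply: (@gen_ind T Gen (fun t => vle (Some 0) (nuT t))); last first.
  move=> x [[y ->]|[a [ain e]]]; first by rewrite nuT_psi; exact: nu_ge0.
  have := nuTm x (psi b); rewrite e !nuT_psi nub => /esym/vsub_eq ->.
  by apply/(vle_vsub0 Hord) => //; rewrite -nub; exact: as_le.
split; [|split].
- by rewrite nuT1 /=; have := le_refl Hord 0.
- move=> x y; case: (T_surj x) => a [n ->]; case: (T_surj y) => a' [n' ->].
  rewrite !nuT_cls => /(vle_vsub0 Hord) h /(vle_vsub0 Hord) h'.
  have e : cls HT (a, b ^+ n) - cls HT (a', b ^+ n') =
      cls HT (a * b ^+ n' - a' * b ^+ n, b ^+ (n + n')).
    rewrite clsN clsD; apply: (eqL HT (okp_addp HT _ _) (okT _ _)).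
    rewrite (opppE (okT a' n')) (addpE (okT a n)) /=; last by split => //; exists n'.
    rewrite exprD; ring.
  rewrite e nuT_cls; apply/(vle_vsub0 Hord); rewrite -nubn exprD.
  apply: vle_sub_ge; try by eexists.
    by rewrite nubn.
  by rewrite nubn.
- move=> x y hx hy; rewrite nuTm.
  by have := vle_add Hord hx hy; rewrite /= addr0.
Qed.

Lemma Rp_closed : subring_closedP Rp. Proof. exact: gen_closed. Qed.
Lemma Rp1 : Rp 1. Proof. by case: Rp_closed. Qed.
Lemma RpB x y : Rp x -> Rp y -> Rp (x - y). Proof. by case: Rp_closed => _ [h _]; apply: h. Qed.
Lemma RpM x y : Rp x -> Rp y -> Rp (x * y). Proof. by case: Rp_closed => _ [_ h]; apply: h. Qed.
Lemma Rp_psi x : Rp (psi x). Proof. by apply: gen_gen; left; exists x. Qed.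

Definition Mp (t : T) := Rp t /\ ~ vlt (Some 0) (nuT t).
Lemma MpE t : Mp t -> nuT t = Some 0.
Proof.
case=> Rt nlt; have := nuT_ge0 Rt.
case E: (nuT t) nlt => [c|] nlt /= h; last by exfalso; apply: nlt; split.
have [e|ne] := pselect (0 = c); first by rewrite e.
by exfalso; apply: nlt; split => //; case.
Qed.
Lemma Mp_of t : Rp t -> nuT t = Some 0 -> Mp t.
Proof. by move=> Rt e; split => //; rewrite e; case. Qed.

Lemma HS : locHyp Rp Mp.
Proof.
split.
- exact: Rp1.
- exact: RpB.
- exact: RpM.
- by apply: Mp_of; [exact: Rp1 | exact: nuT1].
- move=> x y Mx My; apply: Mp_of; first by apply: RpM; [case: Mx | case: My].
  by rewrite nuTm (MpE Mx) (MpE My) /= addr0.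
- by move=> u [].
- by case=> _; rewrite nuT0; apply; split.
Qed.
Definition S := LT HS.
Definition f : T -> S := toL HS.

Definition phi_fun (x : R) : S := f (psi x).
Lemma phi_nmod : nmod_morphism phi_fun.
Proof.
split; first by rewrite /phi_fun rmorph0 /f (toL_A HS (hA0 HS)).
by move=> x y; rewrite /phi_fun rmorphD /f (toLD HS (Rp_psi x) (Rp_psi y)).
Qed.
Lemma phi_monoid : monoid_morphism phi_fun.
Proof.
split; first by rewrite /phi_fun rmorph1 /f toL1.
by move=> x y; rewrite /phi_fun rmorphM /f (toLM HS (Rp_psi x) (Rp_psi y)).
Qed.
Definition phi : {rmorphism R -> S} := mkRM phi_nmod phi_monoid.
Lemma phiE x : phi x = f (psi x). Proof. by []. Qed.

Lemma nuTfin u : Mp u -> nuT u <> None. Proof. by move/MpE ->. Qed.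
Definition nuS : S -> option G := @nuL _ _ _ HS _ nuT.
Lemma nuSm : vmult nuS. Proof. exact: nuL_mult nuTm nuTfin. Qed.
Lemma nuS_f t : Rp t -> nuS (f t) = nuT t. Proof. exact: nuL_toL nuTm nuT1 nuTfin t. Qed.
Lemma nuS_phi x : nuS (phi x) = nu x. Proof. by rewrite phiE nuS_f ?nuT_psi //; exact: Rp_psi. Qed.
Lemma nuS_cls t u : Rp t -> Mp u -> nuS (cls HS (t, u)) = nuT t.
Proof.
move=> Rt Mu; have o : okp Rp Mp (t, u) by split.
rewrite /nuS (nuL_cls HS nuTm nuTfin o).
by rewrite (MpE Mu); case: (nuT t) => //= c; rewrite subr0.
Qed.

Lemma blowup : local_blowup le phi nu b as_.
Proof.
split; first by rewrite nub.
split; first exact: as_le.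
exists T, psi, nuT; split.
- exact: loc_on HT.
- exact: nuTm.
- exact: nuT_psi.
- exists f; split; first exact: loc_on HS.
  by [].
Qed.

Definition gpi (x : R) : Tb := psib (pi x).
Lemma gpiD x y : True -> True -> gpi (x + y) = gpi x + gpi y. Proof. by rewrite /gpi !rmorphD. Qed.
Lemma gpiM x y : True -> True -> gpi (x * y) = gpi x * gpi y. Proof. by rewrite /gpi !rmorphM. Qed.
Lemma gpi1 : gpi 1 = 1. Proof. by rewrite /gpi !rmorph1. Qed.
Lemma psib_bb_unit n : is_unit (psib (bbar ^+ n)).
Proof. by case: Hlocb => _ _ hU _ _; apply: hU; exists n. Qed.
Lemma gpibn n : gpi (b ^+ n) = psib (bbar ^+ n). Proof. by rewrite /gpi rmorphXn pib rmorphXn. Qed.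
Lemma gpiU u : Mb u -> is_unit (gpi u).
Proof. by case=> n ->; rewrite gpibn; exact: psib_bb_unit. Qed.
Definition hR : {rmorphism T -> Tb} := liftRM HT gpiD gpiM gpi1 gpiU.
Lemma h_cls a n : hR (cls HT (a, b ^+ n)) = psib (pi a) * uinv (psib (bbar ^+ n)).
Proof. by rewrite liftRME (liftL_cls HT gpiD gpiM gpiU (okT a n)) gpibn. Qed.
Lemma h_psi x : hR (psi x) = psib (pi x).
Proof. by rewrite liftRME (@liftL_toL _ _ _ HT _ _ gpiD gpiM gpi1 gpiU x I). Qed.
Lemma h_clsE a n : hR (cls HT (a, b ^+ n)) * psib (bbar ^+ n) = psib (pi a).
Proof. by rewrite h_cls -mulrA [uinv _ * _]mulrC uinvK ?mulr1 //; exact: psib_bb_unit. Qed.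

Lemma nu_bn_np n : ~ p (b ^+ n).
Proof. apply: (inD_p (nubn n)); apply: Dn; exact: Dgb. Qed.

Lemma nuTb_h a n : nuTb (hR (cls HT (a, b ^+ n))) = vsub (nu2 (pi a)) (Some (gb *+ n)).
Proof.
apply: vsub_eq; have := HnuTbm (hR (cls HT (a, b ^+ n))) (psib (bbar ^+ n)).
rewrite h_clsE !HnuTbE -pib -rmorphXn (nu2_np (@nu_bn_np n)) nubn => <-.
by [].
Qed.

Lemma nuTb_h_np a n : ~ p a -> nuTb (hR (cls HT (a, b ^+ n))) = nuT (cls HT (a, b ^+ n)).
Proof. by move=> np; rewrite nuTb_h nuT_cls (nu2_np np). Qed.
Lemma nuTb_h_p a n : p a -> nuTb (hR (cls HT (a, b ^+ n))) = None.
Proof. by move=> hp; rewrite nuTb_h (nu2_p hp). Qed.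

Lemma Rb'_closed : subring_closedP Rb'. Proof. exact: gen_closed. Qed.

Lemma h_Rp t : Rp t -> Rb' (hR t).
Proof.
move: t; apply: (@gen_ind T Gen (fun t => Rb' (hR t))); last first.
  move=> x [[y ->]|[a [ain e]]].
    by rewrite h_psi; apply: gen_gen; left; exists (pi y).
  apply: gen_gen; right; exists (pi a); split.
    by case/mapP: ain => y yin ->; rewrite lftK.
  by rewrite -pib -h_psi -rmorphM e h_psi.
case: Rb'_closed => c1 [cB cM]; split; [|split].
- by rewrite rmorph1.
- by move=> x y hx hy; rewrite rmorphB; apply: cB.
- by move=> x y hx hy; rewrite rmorphM; apply: cM.
Qed.

Lemma Rb'_h tb : Rb' tb -> exists t, Rp t /\ hR t = tb.
Proof.
move: tb; apply: (@gen_ind Tb _ (fun tb => exists t, Rp t /\ hR t = tb)); last first.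
  move=> x [[y ->]|[y [yin e]]].
    by case: (Hpi_surj y) => z <-; exists (psi z); split; [exact: Rp_psi | exact: h_psi].
  exists (cls HT (lft y, b ^+ 1)); split.
    apply: gen_gen; right; exists (lft y); split; first exact: map_f.
    have e' := clsE HT (okT (lft y) 1); rewrite expr1 in e' *; exact: e'.
  rewrite h_cls lftK expr1 -pib.
  have u := psib_bb_unit 1; rewrite expr1 in u.
  by rewrite pib -e -mulrA uinvK // mulr1.
case: Rp_closed => c1 [cB cM]; split; [|split].
- by exists 1; split => //; rewrite rmorph1.
- move=> x y [tx [hx <-]] [ty [hy <-]]; exists (tx - ty); split; [exact: cB | exact: rmorphB].
- move=> x y [tx [hx <-]] [ty [hy <-]]; exists (tx * ty); split; [exact: cM | exact: rmorphM].
Qed.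

Lemma fbD x y : Rb' x -> Rb' y -> fb (x + y) = fb x + fb y. Proof. by case: Hfb => h _ _ _ _; apply: h. Qed.
Lemma fbM x y : Rb' x -> Rb' y -> fb (x * y) = fb x * fb y. Proof. by case: Hfb => _ [h _] _ _ _; apply: h. Qed.
Lemma fb1 : fb 1 = 1. Proof. by case: Hfb => _ [_ h] _ _ _. Qed.
Lemma fbU u : Mb' u -> is_unit (fb u). Proof. by case: Hfb => _ _ h _ _; apply: h. Qed.
Lemma fbS y : exists a u, Rb' a /\ Mb' u /\ y * fb u = fb a. Proof. by case: Hfb => _ _ _ h _; apply: h. Qed.
Lemma fbK a : Rb' a -> (fb a = 0 <-> exists u, Mb' u /\ u * a = 0). Proof. by case: Hfb => _ _ _ _ h; apply: h. Qed.
Lemma Rb'0 : Rb' 0. Proof. by case: Rb'_closed => h1 [hB _]; rewrite -(subrr 1); apply: hB. Qed.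
Lemma fb0 : fb 0 = 0.
Proof. have := fbD Rb'0 Rb'0; rewrite addr0 => e; apply: (addrI (fb 0)); by rewrite addr0 -e. Qed.

Lemma center_shift a n :
  (forall d, D d -> vlt (Some d) (nuT (cls HT (a, b ^+ n)))) <-> p a.
Proof.
rewrite nuT_cls; split.
- move=> h d Dd; have := h (d - gb *+ n) (DB Dd (Dn n Dgb)).
  by move/(vlt_shift Hord); rewrite subrK.
- move=> hp d Dd; apply/(vlt_shift Hord); apply: hp; apply: DD => //; exact: Dn Dgb.
Qed.

Lemma Mp_np a n : Mp (cls HT (a, b ^+ n)) -> ~ p a.
Proof.
move/MpE => e hp; have := (proj2 (center_shift a n) hp) 0 D0; rewrite e.
by case=> _; apply.
Qed.

Definition g1f (t : T) : Rbar1 := fb (hR t).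
Lemma g1fD x y : Rp x -> Rp y -> g1f (x + y) = g1f x + g1f y.
Proof. by move=> hx hy; rewrite /g1f rmorphD fbD //; apply: h_Rp. Qed.
Lemma g1fM x y : Rp x -> Rp y -> g1f (x * y) = g1f x * g1f y.
Proof. by move=> hx hy; rewrite /g1f rmorphM fbM //; apply: h_Rp. Qed.
Lemma g1f1 : g1f 1 = 1. Proof. by rewrite /g1f rmorph1 fb1. Qed.
Lemma g1fU u : Mp u -> is_unit (g1f u).
Proof.
move=> Mu; apply: fbU; split; first by apply: h_Rp; case: Mu.
case: (T_surj u) Mu => a [n ->] Mu.
by rewrite (nuTb_h_np _ (Mp_np Mu)) (MpE Mu); case=> _; apply.
Qed.
Definition qR : {rmorphism S -> Rbar1} := liftRM HS g1fD g1fM g1f1 g1fU.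
Lemma q_cls t u : Rp t -> Mp u -> qR (cls HS (t, u)) = fb (hR t) * uinv (fb (hR u)).
Proof. by move=> Rt Mu; rewrite liftRME (liftL_cls HS g1fD g1fM g1fU) //; split. Qed.

Lemma q_surj y : exists x, qR x = y.
Proof.
case: (fbS y) => ab [ub [Ra [Mu e]]].
case: (Rb'_h Ra) => ta [Rta hta]; case: (Rb'_h (proj1 Mu)) => tu [Rtu htu].
have Mtu : Mp tu.
  split => //; case: (T_surj tu) htu => a [n ->] htu.
  have [hp|np] := pselect (p a).
    by exfalso; case: Mu => _; apply; rewrite -htu nuTb_h_p //; split.
  by rewrite -(nuTb_h_np _ np) htu; case: Mu.
exists (cls HS (ta, tu)); rewrite q_cls // hta htu -e -mulrA uinvK ?mulr1 //.
exact: fbU.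
Qed.

Lemma q_ker s : qR s = 0 <-> center1 le nuS D s.
Proof.
case: (cls_surjL s) => t [u [[Rt Mu] ->]].
rewrite /center1 (nuS_cls Rt Mu) q_cls //.
case: (T_surj t) Rt => a [n ->] Rt.
rewrite center_shift.
have uu := uinv_unit (g1fU Mu).
have -> : fb (hR (cls HT (a, b ^+ n))) * uinv (fb (hR u)) = 0 <-> fb (hR (cls HT (a, b ^+ n))) = 0.
  split; last by move=> ->; rewrite mul0r.
  by rewrite mulrC; apply: unit_mul0.
split.
- move/(fbK (h_Rp Rt)) => [ub [Mub e]].
  apply: NNPP => np.
  have := HnuTbm ub (hR (cls HT (a, b ^+ n))); rewrite e.
  rewrite -(rmorph0 psib) HnuTbE -(rmorph0 pi) (nu2_p p0) (nuTb_h_np _ np) nuT_cls.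
  case: (p_inD np) => g [-> _] /=.
  move: Mub => [_ nl]; case: (nuTb ub) nl => [c|] nl //; by exfalso; apply: nl; split.
- move=> hp; have : hR (cls HT (a, b ^+ n)) = 0.
    by rewrite h_cls ((proj1 (p_pi a)) hp) rmorph0 mul0r.
  by move=> ->; exact: fb0.
Qed.

Definition ML (x : R) := ~ p x.
Lemma HL : locHyp (fun _ : R => True) ML.
Proof.
split => //.
- exact: np1.
- by move=> x y; apply: pM.
- by apply; exact: p0.
Qed.
Definition L := LT HL.
Lemma l1_nmod : nmod_morphism (toL HL).
Proof. by split; [rewrite toL_A // | move=> x y; rewrite toLD]. Qed.
Lemma l1_monoid : monoid_morphism (toL HL).
Proof. by split; [rewrite toL1 | move=> x y; rewrite toLM]. Qed.
Definition l1 : {rmorphism R -> L} := mkRM l1_nmod l1_monoid.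

Lemma l1D x y : True -> True -> l1 (x + y) = l1 x + l1 y. Proof. by rewrite rmorphD. Qed.
Lemma l1M x y : True -> True -> l1 (x * y) = l1 x * l1 y. Proof. by rewrite rmorphM. Qed.
Lemma l1U u : Mb u -> is_unit (l1 u).
Proof. by case=> n ->; apply: (toL_unit HL); exact: nu_bn_np. Qed.
Definition kR : {rmorphism T -> L} := liftRM HT l1D l1M (rmorph1 l1) l1U.
Lemma k_cls a n : kR (cls HT (a, b ^+ n)) = l1 a * uinv (l1 (b ^+ n)).
Proof. by rewrite liftRME (liftL_cls HT l1D l1M l1U (okT a n)). Qed.
Lemma k_psi x : kR (psi x) = l1 x.
Proof. by rewrite liftRME (@liftL_toL _ _ _ HT _ _ l1D l1M (rmorph1 l1) l1U x I). Qed.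
Lemma k_unit a n : ~ p a -> is_unit (kR (cls HT (a, b ^+ n))).
Proof.
move=> np; rewrite k_cls; apply: unitM; first exact: (toL_unit HL).
apply: uinv_unit; apply: (toL_unit HL); exact: nu_bn_np.
Qed.

Lemma kD x y : Rp x -> Rp y -> kR (x + y) = kR x + kR y. Proof. by rewrite rmorphD. Qed.
Lemma kM x y : Rp x -> Rp y -> kR (x * y) = kR x * kR y. Proof. by rewrite rmorphM. Qed.
Lemma kU u : Mp u -> is_unit (kR u).
Proof. by case: (T_surj u) => a [n ->] Mu; apply: k_unit; exact: Mp_np Mu. Qed.
Definition l2 : {rmorphism S -> L} := liftRM HS kD kM (rmorph1 kR) kU.
Lemma l2_cls t u : Rp t -> Mp u -> l2 (cls HS (t, u)) = kR t * uinv (kR u).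
Proof. by move=> Rt Mu; rewrite liftRME (liftL_cls HS kD kM kU) //; split. Qed.
Lemma l2_phi x : l2 (phi x) = l1 x.
Proof.
rewrite phiE liftRME (@liftL_toL _ _ _ HS _ _ kD kM (rmorph1 kR) kU _ (Rp_psi x)).
exact: k_psi.
Qed.

Lemma l2_loc : is_localization (fun s => ~ center1 le nuS D s) l2.
Proof.
split.
- by move=> x y _ _; rewrite rmorphD.
- by split; [move=> x y _ _; rewrite rmorphM | exact: rmorph1].
- move=> s; case: (cls_surjL s) => t [u [[Rt Mu] ->]].
  rewrite /center1 (nuS_cls Rt Mu) => nc.
  case: (T_surj t) Rt nc => a [n ->] Rt; rewrite center_shift => np.
  rewrite l2_cls //; apply: unitM; first exact: k_unit.
  by apply: uinv_unit; apply: kU.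
- move=> l; case: (cls_surjL l) => a [u [[_ Mu] ->]].
  exists (phi a), (phi u); split => //; split.
    by rewrite /center1 nuS_phi.
  by rewrite !l2_phi; exact: (clsE HL (conj I Mu)).
- move=> s _; split; last first.
    case=> s' [ns' e]; apply: (@unit_mul0 _ (l2 s')).
      apply: NNPP => nu'; apply: ns'.
      case: (cls_surjL s') nu' => t [u [[Rt Mu] ->]].
      rewrite /center1 (nuS_cls Rt Mu).
      case: (T_surj t) Rt => a [n ->] Rt nu'; rewrite center_shift.
      apply: NNPP => np; apply: nu'; rewrite l2_cls //; apply: unitM; first exact: k_unit.
      by apply: uinv_unit; apply: kU.
    by rewrite -rmorphM e rmorph0.
  case: (cls_surjL s) => t [u [[Rt Mu] ->]].
  case: (T_surj t) Rt => a [n ->] Rt.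
  rewrite l2_cls // k_cls => e.
  have e1 : l1 a = 0.
    have u1 := uinv_unit (kU Mu); have u2 := uinv_unit (toL_unit HL (@nu_bn_np n)).
    move: e; rewrite -mulrA => /eqP; rewrite mulrC => /eqP /(unit_mul0 (unitM u2 u1)).
    by [].
  have [w [nw ew]] := (proj1 (toL0 HL (a:=a) I)) e1.
  exists (phi (w * b ^+ n) * f u); split.
    rewrite /center1 nuSm nuS_phi (nuS_f (proj1 Mu)) (MpE Mu) => h.
    have [g [eg Dg]] := p_inD (pM nw (@nu_bn_np n)).
    by case: (h g Dg); rewrite eg /= addr0.
  have e2 : cls HS (cls HT (a, b ^+ n), u) * f u = f (cls HT (a, b ^+ n)).
    by apply: (clsE HS); split.
  have e3 : f (cls HT (a, b ^+ n)) * f (psi (b ^+ n)) = f (psi a).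
    rewrite /f -(toLM HS Rt (Rp_psi _)); congr (toL HS _).
    exact: (clsE HT (okT a n)).
  rewrite rmorphM !phiE.
  have -> : f (psi w) * f (psi (b ^+ n)) * f u * cls HS (cls HT (a, b ^+ n), u)
    = f (psi w) * (cls HS (cls HT (a, b ^+ n), u) * f u * f (psi (b ^+ n))) by ring.
  rewrite e2 e3 -!phiE -rmorphM.
  by rewrite ew rmorph0.
Qed.

Lemma main_sec : exists (S0 : comNzRingType) (phi0 : {rmorphism R -> S0}) (b0 : R) (as0 : seq R)
         (nuS0 : S0 -> option G),
    [/\ local_blowup le phi0 nu b0 as0,
        vmult nuS0 /\ (forall x, nuS0 (phi0 x) = nu x),
        (exists (Q1 : comNzRingType) (q : {rmorphism S0 -> Q1}),
           [/\ forall y, exists x, q x = y,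
               forall s, q s = 0 <-> center1 le nuS0 D s
             & exists i : {rmorphism Q1 -> Rbar1}, bijective i])
      & exists (L1 L2 : comNzRingType) (l1 : {rmorphism R -> L1}) (l2 : {rmorphism S0 -> L2}),
          [/\ is_localization (fun x => ~ center1 le nu D x) l1,
              is_localization (fun s => ~ center1 le nuS0 D s) l2
            & exists i : {rmorphism L1 -> L2}, bijective i]].
Proof.
exists S, phi, b, as_, nuS; split.
- exact: blowup.
- split; [exact: nuSm | exact: nuS_phi].
- exists Rbar1, qR; split; [exact: q_surj | exact: q_ker | ].
  by exists (idRM Rbar1); exists id.
- exists L, L, l1, l2; split; [exact: loc_on HL | exact: l2_loc | ].
  by exists (idRM L); exists id.
Qed.
End Main.

Theorem mainTheorem6
  (R : comNzRingType) (m : R -> Prop)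
  (G : zmodType) (le : rel G) (nu : R -> option G) (D : G -> Prop)
  (Hnoeth : noetherian R) (Hloc : is_local m)
  (Hord : ordered_group le) (Hval : is_valuation le nu) (Hcent : centered_on le nu m)
  (HD : convex_subgroup le nu D)
  (Q : comNzRingType) (pi : {rmorphism R -> Q})
  (Hpi_surj : forall y, exists x, pi x = y)
  (Hpi_ker : forall x, pi x = 0 <-> center1 le nu D x)
  (nu2 : Q -> option G)
  (Hnu2 : forall x, (center1 le nu D x -> nu2 (pi x) = None) /\
                    (~ center1 le nu D x -> nu2 (pi x) = nu x))
  (Rbar1 : comNzRingType) (phibar : {rmorphism Q -> Rbar1}) (bbar : Q) (asbar : seq Q)
  (Hbl : local_blowup le phibar nu2 bbar asbar) :
  exists (S : comNzRingType) (phi : {rmorphism R -> S}) (b : R) (as_ : seq R)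
         (nuS : S -> option G),
    [/\ local_blowup le phi nu b as_,
        vmult nuS /\ (forall x, nuS (phi x) = nu x),
        (exists (Q1 : comNzRingType) (q : {rmorphism S -> Q1}),
           [/\ forall y, exists x, q x = y,
               forall s, q s = 0 <-> center1 le nuS D s
             & exists i : {rmorphism Q1 -> Rbar1}, bijective i])
      & exists (L1 L2 : comNzRingType) (l1 : {rmorphism R -> L1}) (l2 : {rmorphism S -> L2}),
          [/\ is_localization (fun x => ~ center1 le nu D x) l1,
              is_localization (fun s => ~ center1 le nuS D s) l2
            & exists i : {rmorphism L1 -> L2}, bijective i]].
Proof.
case: Hbl => Hbb [Has [Tb [psib [nuTb [Hlocb HnuTbm HnuTbE [fb [Hfb Hphib]]]]]]].
by apply: (main_sec Hord Hval Hcent HD Hpi_surj Hpi_ker Hnu2 Hbb Has Hlocb HnuTbm HnuTbE Hfb).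
Qed.
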